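(* Fix an association $\kappa$ in which every UE is served by at least one cell and every cell serves at least one UE, and fix a demand vector $\bm{d}\in\mathbb{R}^m_{>0}$. Let $\bm{p}\in\mathbb{R}^n_{>0}$, let $\alpha>1$, and set $\bm{p}'=\bm{p}/\alpha$. Let $\bm{x}$ be the fixed point $\bm{x}=\bm{f}(\bm{h}(\bm{x},\bm{p},\kappa),\bm{d},\kappa)$, and let $\bm{x}'$ be the fixed point $\bm{x}'=\bm{f}(\bm{h}(\bm{x}',\bm{p}',\kappa),\bm{d},\kappa)$. Then $x'_i<\alpha x_i$ for all $i\in\mathcal{I}$.
   Context: Cellular network model. $\mathcal{I}$ is a set of $n$ cells and $\mathcal{J}$ a set of $m$ UEs. For an association $\kappa\in\{0,1\}^{n\times m}$, let $\mathcal{I}_j=\{i:\kappa_{ij}=1\}$ and $\mathcal{J}_i=\{j:\kappa_{ij}=1\}$. $M,B>0$ are constants, $\sigma^2>0$ is the noise power and $g_{ij}>0$ are the channel gains. For $\bm{x}\in\mathbb{R}^n_{\ge0}$ and $\bm{p}\in\mathbb{R}^n_{>0}$: - $h_j(\bm{x},\bm{p},\kappa)=\dfrac{\sum_{i\in\mathcal{I}_j}p_ig_{ij}}{\sum_{k\in\mathcal{I}\setminus\mathcal{I}_j}p_kg_{kj}x_k+\sigma^2}$; - $f_i(\bm{\gamma},\bm{d},\kappa)=\sum_{j\in\mathcal{J}_i}\dfrac{d_j}{MB\log_2(1+\gamma_j)}$. It is known, and assumed here, that for fixed $\bm{p},\bm{d},\kappa$ the map $\bm{x}\mapsto\bm{f}(\bm{h}(\bm{x},\bm{p},\kappa),\bm{d},\kappa)$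 is a standard interference function with a unique fixed point in $\mathbb{R}^n_{\ge0}$. *)

(* Defs.v *)
From mathcomp Require Import all_boot all_order all_algebra.
From mathcomp Require Import all_classical all_reals all_analysis.
Import Order.TTheory GRing.Theory Num.Theory.
Local Open Scope ring_scope.

(* Cells are indexed by 'I_n, UEs by 'I_m; an association is kappa : 'I_n -> 'I_m -> bool. *)

Definition log2 {R : realType} (x : R) : R := ln x / ln 2.

Definition hfun {R : realType} {n m : nat} (kappa : 'I_n -> 'I_m -> bool)
  (g : 'I_n -> 'I_m -> R) (sigma2 : R) (x p : 'I_n -> R) (j : 'I_m) : R :=
  (\sum_(i < n | kappa i j) p i * g i j) /
  (\sum_(k < n | ~~ kappa k j) p k * g k j * x k + sigma2).

Definition ffun {R : realType} {n m : nat} (kappa : 'I_n -> 'I_m -> bool)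
  (M B : R) (gamma d : 'I_m -> R) (i : 'I_n) : R :=
  \sum_(j < m | kappa i j) d j / (M * B * log2 (1 + gamma j)).

Definition is_load_fixpoint {R : realType} {n m : nat} (kappa : 'I_n -> 'I_m -> bool)
  (g : 'I_n -> 'I_m -> R) (sigma2 M B : R) (p : 'I_n -> R) (d : 'I_m -> R)
  (x : 'I_n -> R) : Prop :=
  (forall i, 0 <= x i) /\
  (forall i, x i = ffun kappa M B (hfun kappa g sigma2 x p) d i).

(* Main.v *)
Require Import Defs.
From mathcomp Require Import all_boot all_order all_algebra.
From mathcomp Require Import all_classical all_reals all_analysis.
From mathcomp Require Import ring lra.
Import Order.TTheory GRing.Theory Num.Theory.
Local Open Scope ring_scope.

Lemma ln_le_sub1 {R : realType} (y : R) : 0 < y -> ln y <= y - 1.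
Proof.
move=> y0; have := expR_ge1Dx (ln y); rewrite lnK ?posrE // => h; lra.
Qed.

Lemma ln_lt_sub1 {R : realType} (y : R) : 0 < y -> y != 1 -> ln y < y - 1.
Proof.
move=> y0 y1; have : ln y != 0 by rewrite ln_eq0.
move=> /expR_gt1Dx; rewrite lnK ?posrE // => h; lra.
Qed.

Lemma key_ln {R : realType} (c t : R) : 1 < c -> 0 < t ->
  ln (1 + t) / c < ln (1 + t / c).
Proof.
move=> c1 t0.
have c0 : 0 < c by lra.
have tc0 : 0 < t / c by rewrite divr_gt0.
set u := 1 + t / c; set v := 1 + t.
have u0 : 0 < u by rewrite /u; lra.
have v0 : 0 < v by rewrite /v; lra.
have tcl : t / c < t.
  by rewrite ltr_pdivrMr // -{1}[t]mulr1 ltr_pM2l.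
have vu : v / u != 1.
  rewrite (can2_eq (divfK _) (mulfK _)) ?gt_eqF // mul1r /u /v; lra.
have A := @ln_lt_sub1 _ (v / u) (divr_gt0 v0 u0) vu.
have B := @ln_le_sub1 _ (u^-1) ltac:(by rewrite invr_gt0).
rewrite ln_div ?posrE // in A.
rewrite lnV ?posrE // in B.
have w0 : 0 < c^-1 by rewrite invr_gt0.
have w1 : c^-1 < 1 by rewrite invf_lt1.
have A' : c^-1 * (ln v - ln u) < c^-1 * (v / u - 1) by rewrite ltr_pM2l.
have B' : (1 - c^-1) * (- ln u) <= (1 - c^-1) * (u^-1 - 1).
  by rewrite ler_pM2l // subr_gt0.
have E : c^-1 * (v / u - 1) + (1 - c^-1) * (u^-1 - 1) = 0.
  rewrite /u /v; field; apply/andP; split; apply/negP => /eqP; lra.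
have : c^-1 * (ln v - ln u) + (1 - c^-1) * (- ln u) < 0.
  rewrite -E; exact: ltr_leD.
move=> h; have : c^-1 * ln v - ln u < 0.
  by move: h; congr (_ < _); ring.
rewrite mulrC; lra.
Qed.

Lemma sum_gt0_ex {R : realType} {n : nat} (P : pred 'I_n) (F : 'I_n -> R) :
  (exists k, P k) -> (forall k, P k -> 0 < F k) -> 0 < \sum_(k < n | P k) F k.
Proof.
move=> [k Pk] Fp.
have := @ltr_sum R _ (index_enum 'I_n) P (fun=> 0) F.
rewrite big1 //; apply => //.
by apply/hasP; exists k => //; rewrite mem_index_enum.
Qed.

Lemma hbound {R : realType} (S D D' s a c : R) : 0 < S -> 0 <= D -> 0 <= D' -> 0 < s ->
  0 < a -> a <= c -> a * D' <= c * D -> S / (D + s) / c <= (S / a) / (D' + s).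
Proof.
move=> S0 D0 D'0 s0 a0 ac H.
have c0 : 0 < c by apply: lt_le_trans ac.
rewrite -mulrA -invfM -[S / a / _]mulrA -invfM ler_pM2l // lef_pV2 ?posrE.
- nra.
- by rewrite mulr_gt0 // ltr_wpDl.
- by rewrite mulr_gt0 // ltr_wpDl.
Qed.

Lemma log2_le {R : realType} (a b : R) : 0 < a -> a <= b -> log2 a <= log2 b.
Proof.
move=> a0 ab; rewrite /log2 ler_pM2r ?invr_gt0 ?ln_gt0 ?ltr1n //.
by rewrite ler_ln ?posrE // (lt_le_trans a0).
Qed.

Lemma log2_gt0 {R : realType} (a : R) : 1 < a -> 0 < log2 a.
Proof. by move=> a1; rewrite /log2 divr_gt0 ?ln_gt0 ?ltr1n. Qed.

Theorem lemma4 (R : realType) (n m : nat)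
  (kappa : 'I_n -> 'I_m -> bool) (g : 'I_n -> 'I_m -> R) (sigma2 M B : R)
  (d : 'I_m -> R) (p : 'I_n -> R) (alpha : R) (x x' : 'I_n -> R) :
  0 < M -> 0 < B -> 0 < sigma2 -> (forall i j, 0 < g i j) ->
  (forall j, exists i, kappa i j) ->
  (forall i, exists j, kappa i j) ->
  (forall j, 0 < d j) ->
  (forall i, 0 < p i) ->
  1 < alpha ->
  is_load_fixpoint kappa g sigma2 M B p d x ->
  is_load_fixpoint kappa g sigma2 M B (fun i => p i / alpha) d x' ->
  forall i, x' i < alpha * x i.
Proof.
move=> M0 B0 s0 g0 hj hi d0 p0 a1 [x0 fx] [x'0 fx'] i.
have a0 : 0 < alpha by lra.
have hpos : forall (q y : 'I_n -> R) j, (forall k, 0 < q k) -> (forall k, 0 <= y k) ->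
    0 < hfun kappa g sigma2 y q j.
  move=> q y j q0 y0; rewrite /hfun divr_gt0 //.
    by apply: sum_gt0_ex => // k _; rewrite mulr_gt0.
  by rewrite ltr_wpDl // sumr_ge0 // => k _; rewrite mulr_ge0 // ?mulr_ge0 // ltW.
have xpos : forall k, 0 < x k.
  move=> k; rewrite fx; apply: sum_gt0_ex => // j _.
  apply: divr_gt0 => //; apply: mulr_gt0; first exact: mulr_gt0.
  by apply: log2_gt0; rewrite ltrDl; exact: hpos.
pose F := fun k => x' k / x k.
case: (@arg_maxP _ R 'I_n i predT F) => // i0 _ Hmax.
set c := F i0 in Hmax.
have Hle : forall k, x' k <= c * x k.
  by move=> k; rewrite -ler_pdivrMr // ; exact: Hmax.
suff ca : c < alpha by apply: (le_lt_trans (Hle i)); rewrite ltr_pM2r.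
rewrite ltNge; apply/negP => ac.
have c1 : 1 < c by lra.
have c0 : 0 < c by lra.
have Hc : c * x i0 = x' i0 by rewrite /c /F divfK // gt_eqF.
suff : x' i0 < c * x i0 by rewrite Hc ltxx.
rewrite {1}fx' fx mulr_sumr; apply: ltr_sum.
  by case: (hi i0) => j kj; apply/hasP; exists j => //; rewrite mem_index_enum.
move=> j kj.
set h := hfun kappa g sigma2 x p j.
set h' := hfun kappa g sigma2 x' (fun i => p i / alpha) j.
have h0 : 0 < h by apply: hpos.
have hh' : h / c <= h'.
  rewrite /h /h' /hfun.
  have -> : \sum_(i < n | kappa i j) p i / alpha * g i j =
            (\sum_(i < n | kappa i j) p i * g i j) / alpha.
    by rewrite mulr_suml; apply: eq_bigr => k _; rewrite mulrAC.
  apply: hbound => //.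
  - by apply: sum_gt0_ex => // k _; rewrite mulr_gt0.
  - by rewrite sumr_ge0 // => k _; rewrite mulr_ge0 // ?mulr_ge0 // ltW.
  - rewrite sumr_ge0 // => k _; apply: mulr_ge0 => //; apply: mulr_ge0; [apply: divr_ge0|]; exact: ltW.
  - rewrite !mulr_sumr; apply: ler_sum => k _.
    have -> : alpha * (p k / alpha * g k j * x' k) = p k * g k j * x' k.
      by field; rewrite gt_eqF.
    have -> : c * (p k * g k j * x k) = p k * g k j * (c * x k) by ring.
    by rewrite ler_pM2l ?mulr_gt0.
have L0 : 0 < log2 (1 + h) by rewrite log2_gt0 // ltrDl.
have key : log2 (1 + h) / c < log2 (1 + h / c).
  rewrite /log2 mulrAC ltr_pM2r ?invr_gt0 ?ln_gt0 ?ltr1n //; exact: key_ln.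
have mono : log2 (1 + h / c) <= log2 (1 + h').
  by apply: log2_le; rewrite ?lerD2l // ltr_wpDr // divr_ge0 // ltW.
have L'0 : 0 < log2 (1 + h') by apply: lt_le_trans mono; apply: le_lt_trans key; rewrite divr_ge0 // ltW.
have -> : c * (d j / (M * B * log2 (1 + h))) = d j / (M * B * (log2 (1 + h) / c)).
  by field; rewrite !gt_eqF.
rewrite ltr_pM2l // ltf_pV2; last 2 first.
- by rewrite posrE mulr_gt0 // mulr_gt0.
- rewrite posrE; apply: mulr_gt0; [exact: mulr_gt0 | exact: divr_gt0].
rewrite ltr_pM2l ?mulr_gt0 //.
exact: lt_le_trans mono.
Qed.
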